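(* Let $P_X$ be a probability distribution on a context space $\mathcal{X}$, let $\mathcal{A}$ be a finite action set, and let $\pi_0,\pi_\theta$ be policies with $\pi_0(a|x)>0$ for all $(x,a)$. Let $f_r:\mathcal{X}\times\mathcal{A}\to[c,b]$ be a measurable reward function with $b\ge 0$, and set $w(a,x)=\pi_\theta(a|x)/\pi_0(a|x)$. Suppose that the random variable $w(A,X)f_r^2(A,X)$ is $\sigma$-sub-Gaussian both when $(X,A)\sim P_X\otimes\pi_0(A|X)$ and when $(X,A)\sim P_X\otimes\pi_\theta(A|X)$. Then $$\operatorname{Var}\bigl(w(A,X)f_r(A,X)\bigr)\le \sqrt{2\sigma^2\min\bigl(D(\pi_\theta\|\pi_0),D_r(\pi_\theta\|\pi_0)\bigr)}+b_u^2-c_l^2,$$ where $c_l=\max(c,0)$, $b_u=\max(|c|,b)$, and the variance is taken under $(X,A)\sim P_X\otimes\pi_0(A|X)$.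
   Context: A policy is a conditional distribution $\pi(a|x)$ over $\mathcal{A}$ given $x\in\mathcal{X}$; $P_X\otimes\pi(A|X)$ denotes the joint law of $(X,A)$ with $X\sim P_X$, $A|X=x\sim\pi(\cdot|x)$. The true risk is $R(\pi)=\mathbb{E}_{P_X}[\mathbb{E}_{\pi(A|X)}[f_r(X,A)]]$. The variance is $\operatorname{Var}(w f_r)=\mathbb{E}_{P_X\otimes\pi_0}[(w(A,X)f_r(A,X))^2]-R^2(\pi_\theta)$ (note $\mathbb{E}_{P_X\otimes\pi_0}[w f_r]=R(\pi_\theta)$). Conditional KL: $D(\pi_\theta\|\pi_0)=D(\pi_\theta(A|X)\|\pi_0(A|X)|P_X)=\int_{\mathcal{X}} D(\pi_\theta(\cdot|x)\|\pi_0(\cdot|x))\,dP_X(x)$, and reverse conditional KL $D_r(\pi_\theta\|\pi_0)=D(\pi_0(A|X)\|\pi_\theta(A|X)|P_X)$, where $D(P\|Q)=\int\log\frac{dP}{dQ}dP$ (or $+\infty$ if $P\not\ll Q$). A random variable $Y$ is $\sigma$-sub-Gaussian if $\mathbb{E}[e^{\gamma(Y-\mathbb{E}Y)}]\le e^{\gamma^2\sigma^2/2}$ for all $\gamma\in\mathbb{R}$. *)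

(* Defs.v *)
From HB Require Import structures.
From mathcomp Require Import all_boot all_order all_algebra.
From mathcomp Require Import all_classical all_reals all_analysis.
Set Implicit Arguments. Unset Strict Implicit. Unset Printing Implicit Defensive.
Import Order.TTheory GRing.Theory Num.Theory.
Local Open Scope ring_scope.
Local Open Scope ereal_scope.

(* A policy on a finite action set A: pi x a = pi(a|x), a probability vector
   for every context x, measurable in x for each fixed action. *)
Definition policy (d : measure_display) (T : measurableType d) (R : realType)
  (A : finType) (pi : T -> A -> R) : Prop :=
  (forall x a, (0 <= pi x a)%R) /\
  (forall x, (\sum_(a : A) pi x a)%R = 1%R) /\
  (forall a, measurable_fun setT (fun x => pi x a)).

(* E_{P_X (x) pi}[g(X,A)] = int (sum_a pi(a|x) g(x,a)) dP_X(x) *)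
Definition jexp (d : measure_display) (T : measurableType d) (R : realType)
  (A : finType) (P : probability T R) (pi : T -> A -> R) (g : T -> A -> R)
  : \bar R :=
  \int[P]_x ((\sum_(a : A) pi x a * g x a)%R)%:E.

Definition jintegrable (d : measure_display) (T : measurableType d)
  (R : realType) (A : finType) (P : probability T R) (pi : T -> A -> R)
  (g : T -> A -> R) : Prop :=
  P.-integrable setT (fun x => ((\sum_(a : A) pi x a * `|g x a|)%R)%:E).

Definition subgaussian (d : measure_display) (T : measurableType d)
  (R : realType) (A : finType) (P : probability T R) (pi : T -> A -> R)
  (Y : T -> A -> R) (sigma : R) : Prop :=
  jintegrable P pi Y /\
  forall gamma : R,
    jexp P pi (fun x a => expR (gamma * (Y x a - fine (jexp P pi Y))))
    <= (expR (gamma ^+ 2 * sigma ^+ 2 / 2))%:E.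

Definition kl (R : realType) (A : finType) (p q : A -> R) : \bar R :=
  \sum_(a : A) (if p a == 0%R then 0
                else if q a == 0%R then +oo
                else (p a * ln (p a / q a))%:E).

Definition condKL (d : measure_display) (T : measurableType d) (R : realType)
  (A : finType) (P : probability T R) (p q : T -> A -> R) : \bar R :=
  \int[P]_x kl (p x) (q x).

Definition risk (d : measure_display) (T : measurableType d) (R : realType)
  (A : finType) (P : probability T R) (pi : T -> A -> R) (f : T -> A -> R)
  : \bar R := jexp P pi f.

(* Var(w f_r) under P_X (x) pi0, as E[(w f)^2] - R(pi_theta)^2 *)
Definition ipsVar (d : measure_display) (T : measurableType d) (R : realType)
  (A : finType) (P : probability T R) (pi0 pith : T -> A -> R)
  (f : T -> A -> R) : \bar R :=
  jexp P pi0 (fun x a => ((pith x a / pi0 x a) * f x a) ^+ 2)%R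
  - risk P pith f * risk P pith f.

(* Main.v *)
Require Import Defs.
From HB Require Import structures.
From mathcomp Require Import all_boot all_order all_algebra.
From mathcomp Require Import all_classical all_reals all_analysis.
From mathcomp Require Import measurable_realfun.
From mathcomp Require Import ring lra.
Import Order.TTheory GRing.Theory Num.Theory.
Local Open Scope ring_scope.

Section H.
Context (d : measure_display) (T : measurableType d) (R : realType) (A : finType) (P : probability T R).

Lemma meas_inv (h : T -> R) : measurable_fun setT h -> (forall x, 0 < h x) ->
  measurable_fun setT (fun x => (h x)^-1).
Proof.
move=> mh hp.
have -> : (fun x => (h x)^-1) = (fun x => expR (- ln (h x))).
  by apply/funext => x; rewrite expRN lnK // posrE.
apply: measurableT_comp => //.
apply: measurableT_comp => //.
exact: measurableT_comp.
Qed.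

Lemma int_bnd (h : T -> R) (M : R) : measurable_fun setT h ->
  (forall x, `|h x| <= M) -> P.-integrable setT (EFin \o h).
Proof.
move=> mh hM; apply: (le_integrable measurableT _ _ (finite_measure_integrable_cst P M measurableT)).
- exact/measurable_realfun.measurable_EFinP.
- move=> x _ /=; rewrite lee_fin.
  by apply: (le_trans (hM x)); exact: ler_norm.
Qed.

Lemma meas_sum (h : A -> T -> R) : (forall a, measurable_fun setT (h a)) ->
  measurable_fun setT (fun x => \sum_(a : A) h a x).
Proof. by move=> mh; exact: measurable_sum. Qed.


Local Notation Ir f := (P.-integrable setT (EFin \o f)).

Lemma intD (f g : T -> R) : Ir f -> Ir g ->
  Ir (fun x => f x + g x) /\
  (\int[P]_x ((f x + g x)%:E) = \int[P]_x ((f x)%:E) + \int[P]_x ((g x)%:E))%E.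
Proof.
move=> i1 i2; split.
  apply: (eq_integrable measurableT ((EFin \o f) \+ (EFin \o g))%E); last exact: integrableD.
  by move=> x _ /=; rewrite EFinD.
under eq_integral do rewrite EFinD.
exact: (integralD_EFin measurableT i1 i2).
Qed.

Lemma intZ (k : R) (f : T -> R) : Ir f ->
  Ir (fun x => k * f x) /\
  (\int[P]_x ((k * f x)%:E) = k%:E * \int[P]_x ((f x)%:E))%E.
Proof.
move=> i1; split.
  apply: (eq_integrable measurableT (fun x => k%:E * (EFin \o f) x)%E); last exact: integrableZl.
  by move=> x _ /=; rewrite EFinM.
under eq_integral do rewrite EFinM.
exact: (integralZl measurableT i1).
Qed.

Lemma intC (k : R) : Ir (fun _ => k) /\ (\int[P]_x (k%:E) = k%:E)%E.
Proof.
split; first exact: (finite_measure_integrable_cst P k measurableT).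
by rewrite (integral_cst P measurableT) /= probability_setT mule1.
Qed.

Lemma intfin (f : T -> R) : Ir f -> (\int[P]_x ((f x)%:E) = (fine (\int[P]_x ((f x)%:E)))%:E)%E.
Proof. by move=> i; rewrite fineK //; exact: (integrable_fin_num measurableT i). Qed.


Lemma kl_meas (p q : T -> A -> R) : policy p -> policy q ->
  measurable_fun setT (fun x => kl (q x) (p x) : \bar R).
Proof.
move=> [p0 [p1 pm]] [q0 [q1 qm]]; rewrite /kl.
apply: emeasurable_sum => a.
have -> : (fun x => if q x a == 0 then 0%E else if p x a == 0 then +oo%E
   else (q x a * ln (q x a / p x a))%:E) = (fun x => if q x a == 0 then 0%E
   else if p x a == 0 then +oo%E else (q x a * (ln (q x a) - ln (p x a)))%:E).
  apply/funext => x; case: eqP => // /eqP qn; case: eqP => // /eqP pn.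
  have qp : 0 < q x a by rewrite lt_def qn q0.
  have pp : 0 < p x a by rewrite lt_def pn p0.
  by rewrite ln_div.

apply: measurable_fun_ifT.
- by apply: measurable_fun_eqr => //; exact: measurable_cst.
- exact: measurable_cst.
apply: measurable_fun_ifT.
- by apply: measurable_fun_eqr => //; exact: measurable_cst.
- exact: measurable_cst.
apply/measurable_realfun.measurable_EFinP.
apply: measurable_funM => //; apply: measurable_funB; exact: measurableT_comp.
Qed.


Lemma pt_ineq (p q G K : R) : 0 <= p -> 0 <= q ->
  ((q * (G + (1 - K)) - expR (- K) * (p * expR G))%:E <=
   (if q == 0%R then 0%E else if p == 0%R then +oo%E else (q * ln (q / p))%:E))%E.
Proof.
move=> p0 q0; case: eqP => [->|/eqP qn].
  rewrite mul0r add0r lee_fin oppr_le0; apply: mulr_ge0; first exact: expR_ge0.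
  by apply: mulr_ge0 => //; exact: expR_ge0.
case: eqP => [_|/eqP pn]; first exact: leey.
have qp : 0 < q by rewrite lt_def qn q0.
have pp : 0 < p by rewrite lt_def pn p0.
rewrite lee_fin.
set t := G - K - ln (q / p).
have e1 : expR (- K) * (p * expR G) = q * expR t.
  rewrite /t !expRD !expRN lnK ?posrE ?divr_gt0 //.
  by field; rewrite pn qn gt_eqF ?expR_gt0.
have h := ler_wpM2l (ltW qp) (expR_ge1Dx t).
rewrite e1; rewrite /t in h; nra.
Qed.


Lemma ptsum (p q G : T -> A -> R) (C : R) x : policy p -> policy q ->
  (((\sum_(a : A) q x a * G x a + (1 - C)) - expR (- C) * \sum_(a : A) p x a * expR (G x a))%:E
   <= kl (q x) (p x))%E.
Proof.
move=> [p0 [p1 pm]] [q0 [q1 qm]].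
have -> : (\sum_(a : A) q x a * G x a + (1 - C)) - expR (- C) * \sum_(a : A) p x a * expR (G x a)
   = \sum_(a : A) (q x a * (G x a + (1 - C)) - expR (- C) * (p x a * expR (G x a))).
  symmetry; rewrite sumrB -mulr_sumr; congr (_ - _).
  under eq_bigr do rewrite mulrDr.
  by rewrite big_split /= -mulr_suml q1 mul1r.
rewrite /kl -sumEFin; apply: lee_sum => a _; exact: pt_ineq.
Qed.

Lemma dv (p q G : T -> A -> R) (C : R) : policy p -> policy q ->
  (forall a, measurable_fun setT (fun x => G x a)) ->
  P.-integrable setT (fun x => (\sum_(a : A) q x a * G x a)%:E) ->
  (jexp P p (fun x a => expR (G x a)) <= (expR C)%:E)%E ->
  (condKL P q p < +oo)%E ->
  fine (jexp P q G) <= C + fine (condKL P q p).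
Proof.
move=> hp hq Gm iG hE hK.
have [p0 [p1 pm]] := hp; have [q0 [q1 qm]] := hq.
rewrite /jexp /condKL in hE hK *.
set SG := fun x => \sum_(a : A) q x a * G x a.
set SE := fun x => \sum_(a : A) p x a * expR (G x a).
have iSG : Ir SG by [].
have mSE : measurable_fun setT SE.
  apply: meas_sum => a; apply: measurable_funM => //; exact: measurableT_comp.
have SE0 x : 0 <= SE x.
  by apply: sumr_ge0 => a _; apply: mulr_ge0 => //; exact: expR_ge0.
have iSE : Ir SE.
  apply/integrableP; split; first exact/measurable_EFinP.
  under eq_integral do rewrite /= ger0_norm //.
  exact: (le_lt_trans hE (ltry _)).
set r := fun x => SG x + (1 - C) + -1 * (expR (- C) * SE x).
have pt x : ((r x)%:E <= kl (q x) (p x))%E by rewrite /r mulN1r; exact: ptsum.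
have [i1 e1] := intC (1 - C).
have [i2 e2] := intD _ _ iSG i1.
have [i3 e3] := intZ (expR (- C)) _ iSE.
have [i4 e4] := intZ (-1) _ i3.
have [ir er] := intD _ _ i2 i4.
have mkl := kl_meas _ _ hp hq.
have kl0 x : (0 <= kl (q x) (p x))%E.
  have := ptsum _ _ (fun _ _ => 0) 0 x hp hq.
  rewrite oppr0 expR0 mul1r addr0 big1 ?add0r; last by move=> a _; rewrite mulr0.
  by under eq_bigr do rewrite mulr1; rewrite p1 subrr.
have ikl : P.-integrable setT (fun x => kl (q x) (p x)).
  apply/integrableP; split => //.
  by under eq_integral do rewrite gee0_abs //.
have H := le_integral measurableT ir ikl (fun x _ => pt x).
rewrite /= er e2 e4 e3 e1 in H.
have klf : (\int[P]_x kl (q x) (p x) = (fine (\int[P]_x kl (q x) (p x)))%:E)%E.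
  by rewrite fineK // ge0_fin_numE // integral_ge0.
rewrite klf (intfin _ iSG) (intfin _ iSE) -!EFinM -!EFinD lee_fin in H.
rewrite (intfin _ iSE) lee_fin in hE.
have h1 : expR (- C) * fine (\int[P]_x (SE x)%:E) <= 1.
  rewrite -(expRxMexpNx_1 C) [X in _ <= X]mulrC.
  by apply: ler_wpM2l => //; exact: expR_ge0.
change (fine (\int[P]_x (SG x)%:E) <= C + fine (\int[P]_x kl (q x) (p x))).
lra.
Qed.

Lemma jint_int (q Y : T -> A -> R) : policy q ->
  (forall a, measurable_fun setT (fun x => Y x a)) -> jintegrable P q Y ->
  Ir (fun x => \sum_(a : A) q x a * Y x a).
Proof.
move=> [q0 [q1 qm]] Ym ji.
apply: (le_integrable measurableT _ _ ji).
  apply/measurable_EFinP; apply: meas_sum => a; exact: measurable_funM.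
move=> x _ /=; rewrite lee_fin [X in _ <= X]ger0_norm; last first.
  by apply: sumr_ge0 => a _; apply: mulr_ge0.
apply: (le_trans (ler_norm_sum _ _ _)); apply: ler_sum => a _.
by rewrite normrM ger0_norm.
Qed.

Lemma jexp_aff (q Y : T -> A -> R) (g e : R) : policy q ->
  (forall a, measurable_fun setT (fun x => Y x a)) -> jintegrable P q Y ->
  P.-integrable setT (fun x => (\sum_(a : A) q x a * (g * (Y x a - e)))%:E) /\
  jexp P q (fun x a => g * (Y x a - e)) = (g * (fine (jexp P q Y) - e))%:E.
Proof.
move=> hq Ym ji; have iSY := jint_int _ _ hq Ym ji.
have [q0 [q1 qm]] := hq.
have E x : \sum_(a : A) q x a * (g * (Y x a - e)) =
    g * (\sum_(a : A) q x a * Y x a) + - (g * e).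
  rewrite (eq_bigr (fun a => g * (q x a * Y x a) + (- (g * e)) * q x a)); last first.
    by move=> a _; ring.
  by rewrite big_split /= -!mulr_sumr q1 mulr1.
have [i1 e1] := intZ g _ iSY.
have [i2 e2] := intC (- (g * e)).
have [i3 e3] := intD _ _ i1 i2.
split.
  by apply: (eq_integrable measurableT _ _ _ i3) => x _ /=; rewrite E.
rewrite /jexp; under eq_integral do rewrite E.
rewrite e3 e1 e2 (intfin _ iSY) /jexp -EFinM -EFinD; congr EFin; ring.
Qed.

End H.

Theorem proposition1 (d : measure_display) (T : measurableType d)
  (R : realType) (A : finType) (P : probability T R)
  (pi0 pith : T -> A -> R) (f : T -> A -> R) (c b sigma : R) :
  policy pi0 -> policy pith ->
  (forall x a, 0 < pi0 x a) ->
  (forall a, measurable_fun setT (fun x => f x a)) ->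
  (forall x a, c <= f x a <= b) ->
  0 <= b ->
  let w := fun x a => pith x a / pi0 x a in
  subgaussian P pi0 (fun x a => w x a * f x a ^+ 2) sigma ->
  subgaussian P pith (fun x a => w x a * f x a ^+ 2) sigma ->
  let m := Order.min (condKL P pith pi0) (condKL P pi0 pith) in
  (m < +oo)%E ->
  (ipsVar P pi0 pith f <=
    (Num.sqrt (2 * sigma ^+ 2 * fine m)
     + Num.max `|c| b ^+ 2 - Num.max c 0 ^+ 2)%:E)%E.
Proof.
move=> hp0 hpt pos fm fb b0 w sg0 sgt m mfin.
have [p00 [p01 p0m]] := hp0; have [pt0 [pt1 ptm]] := hpt.
set Y := fun x a => w x a * f x a ^+ 2.
have wm a : measurable_fun setT (fun x => w x a).
  apply: measurable_funM => //; apply: meas_inv => //; exact: pos.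
have Ym a : measurable_fun setT (fun x => Y x a).
  by apply: measurable_funM => //; exact: measurable_funX.
have ji0 := sg0.1; have jit := sgt.1.
set E0 := fine (jexp P pi0 Y); set Et := fine (jexp P pith Y).
have key mu : 0 < mu -> mu * (Et - E0) <= mu ^+ 2 * sigma ^+ 2 / 2 + fine m.
  move=> mu0; move: mfin; rewrite /m minEle; case: ifPn => _ mfin.
  - have [iG eG] := jexp_aff _ _ _ _ P pith Y mu E0 hpt Ym jit.
    have := dv _ _ _ _ P pi0 pith (fun x a => mu * (Y x a - E0)) (mu ^+ 2 * sigma ^+ 2 / 2) hp0 hpt _ iG (sg0.2 mu) mfin.
    rewrite eG /=; apply.
    move=> a; apply: measurable_funM => //; apply: measurable_funB => //.
  - have [iG eG] := jexp_aff _ _ _ _ P pi0 Y (- mu) Et hp0 Ym ji0.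
    have := dv _ _ _ _ P pith pi0 (fun x a => (- mu) * (Y x a - Et)) ((- mu) ^+ 2 * sigma ^+ 2 / 2) hpt hp0 _ iG (sgt.2 (- mu)) mfin.
    rewrite eG /= sqrrN => h.
    + have -> : mu * (Et - E0) = - mu * (E0 - Et) by ring.
      apply: h => a; apply: measurable_funM => //; apply: measurable_funB => //.
set D := fine m.
have hD : Et - E0 <= Num.sqrt (2 * sigma ^+ 2 * D).
  set De := Et - E0.
  have [h|hpos] := leP De 0; first exact: (le_trans h (sqrtr_ge0 _)).
  have [s0|s0] := eqVneq sigma 0.
    have := key ((`|D| + 1) / De) (divr_gt0 (ltr_pwDr ltr01 (normr_ge0 _)) hpos).
    rewrite s0 expr0n /= mulr0 mul0r add0r mulfVK ?gt_eqF //.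
    rewrite -/D; have := ler_norm D; lra.
  have s2p : 0 < sigma ^+ 2 by rewrite lt_def sqrf_eq0 s0 sqr_ge0.
  have := key (De / sigma ^+ 2) (divr_gt0 hpos s2p).
  change (De / sigma ^+ 2 * De <= (De / sigma ^+ 2) ^+ 2 * sigma ^+ 2 / 2 + D -> De <= Num.sqrt (2 * sigma ^+ 2 * D)).
  have -> : De / sigma ^+ 2 * De = De ^+ 2 / sigma ^+ 2 by rewrite mulrAC -expr2.
  have -> : (De / sigma ^+ 2) ^+ 2 * sigma ^+ 2 / 2 = De ^+ 2 / sigma ^+ 2 / 2.
    by field.
  move=> h1.
  have h2 : De ^+ 2 / sigma ^+ 2 <= 2 * D by lra.
  have h3 : De ^+ 2 <= 2 * sigma ^+ 2 * D.
    by move: h2; rewrite ler_pdivrMr // mulrAC.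
  rewrite -[De]ger0_norm; last exact: ltW hpos.
  rewrite -sqrtr_sqr; exact: ler_wsqrtr.
set bu := Num.max `|c| b.
have fab x a : `|f x a| <= bu.
  have [h1 h2] := andP (fb x a).
  have hc : `|c| <= bu by rewrite le_max lexx.
  have hb : b <= bu by rewrite le_max lexx orbT.
  have hc2 : - c <= `|c| by rewrite -normrN ler_norm.
  rewrite ler_norml; apply/andP; split; lra.
have fb2 x a : f x a ^+ 2 <= bu ^+ 2.
  have := fab x a; rewrite ler_norml => /andP [h1 h2].
  have : 0 <= bu by apply: le_trans (fab x a).
  nra.
have wE x a : pi0 x a * Y x a = pith x a * f x a ^+ 2.
  by rewrite /Y /w; field; rewrite gt_eqF.
have eA : jexp P pi0 (fun x a => (pith x a / pi0 x a * f x a) ^+ 2) = jexp P pith Y.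
  rewrite /jexp; apply: eq_integral => x _; congr EFin; apply: eq_bigr => a _.
  by rewrite /Y /w; field; rewrite gt_eqF.
have iYt := jint_int _ _ _ _ P pith Y hpt Ym jit.
have iY0 := jint_int _ _ _ _ P pi0 Y hp0 Ym ji0.
have eEt : jexp P pith Y = Et%:E := intfin _ _ _ P _ iYt.
have icb := (intC _ _ _ P (bu ^+ 2)).1.
have hE0 : E0 <= bu ^+ 2.
  have h : (\int[P]_x ((\sum_(a : A) pi0 x a * Y x a)%:E) <= \int[P]_x ((bu ^+ 2)%:E))%E.
    apply: (le_integral measurableT iY0 icb) => x _ /=; rewrite lee_fin.
    under eq_bigr do rewrite wE.
    apply: (le_trans (ler_sum _ (fun a _ => ler_wpM2l (pt0 x a) (fb2 x a)))).
    by rewrite -mulr_suml pt1 mul1r.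
  rewrite (intC _ _ _ P _).2 (intfin _ _ _ P _ iY0) lee_fin in h.
  exact: h.
have jF : jintegrable P pith f.
  apply: (int_bnd _ _ _ P _ bu).
    apply: meas_sum => a; apply: measurable_funM => //; exact: measurableT_comp.
  move=> x; rewrite ger0_norm; last by apply: sumr_ge0 => a _; apply: mulr_ge0.
  apply: (le_trans (ler_sum _ (fun a _ => ler_wpM2l (pt0 x a) (fab x a)))).
  by rewrite -mulr_suml pt1 mul1r.
have iF := jint_int _ _ _ _ P pith f hpt fm jF.
set rf := fine (jexp P pith f).
have eR : risk P pith f = rf%:E := intfin _ _ _ P _ iF.
have icc := (intC _ _ _ P c).1.
have hrf : c <= rf.
  have h : (\int[P]_x (c%:E) <= \int[P]_x ((\sum_(a : A) pith x a * f x a)%:E))%E.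
    apply: (le_integral measurableT icc iF) => x _ /=; rewrite lee_fin.
    have -> : c = \sum_(a : A) pith x a * c by rewrite -mulr_suml pt1 mul1r.
    apply: ler_sum => a _; apply: ler_wpM2l => //.
    by have /andP[] := fb x a.
  rewrite (intC _ _ _ P _).2 (intfin _ _ _ P _ iF) lee_fin in h.
  exact: h.
have hcl : Num.max c 0 ^+ 2 <= rf * rf.
  have [hc|hc] := leP 0 c.
    nra.
  nra.
rewrite /ipsVar eA eEt eR -EFinM -EFinB lee_fin.
rewrite -/D; lra.
Qed.
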